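(* Let $\mathbb{X},\mathbb{Y}$ be Banach spaces, $\varphi:\mathbb{X}\to\mathbb{Y}$ a continuously differentiable mapping, $A$ a closed subset of $\mathbb{Y}$ and $\bar x\in\varphi^{-1}(A)$. Suppose that $A$ has the Shapiro first order contact property at $\varphi(\bar x)$ and that $\varphi$ is metrically regular around $\bar x$. Then $\varphi^{-1}(A)$ has the Shapiro first order contact property at $\bar x$.
   Context: $\mathbf{B}(a,\delta)$ denotes the open ball with center $a$ and radius $\delta$; $\mathbf{d}(x,D):=\inf\{\|x-y\|:y\in D\}$. ''Continuously differentiable'' means Fréchet differentiable everywhere with $x\mapsto\nabla\varphi(x)$ continuous in operator norm. For a closed set $C$ and $c\in C$, the Bouligand tangent cone $\mathbf{T}^{\mathbf B}(C,c)$ is the set of all $v$ for which there exist $v_n\to v$ and $t_n\downarrow0$ with $c+t_nv_n\in C$ for all $n$. A closed set $C$ of a Banach space has the Shapiro first order contact property at $a\in C$ if for every $\varepsilon>0$ there is $\delta>0$ such that $\mathbf{d}(x-u,\mathbf{T}^{\mathbf B}(C,u))\le\varepsilon\|x-u\|$ for all $x,u\in C\cap\mathbf{B}(a,\delta)$. A single-valued mapping $\varphi$ is metrically regular around $\bar x$ if there exist $\kappa>0$ and neighborhoods $U$ of $\bar x$ and $V$ of $\varphi(\bar x)$ such that $\mathbf{d}(x,\varphi^{-1}(y))\le\kappa\|\varphi(x)-y\|$ for all $(x,y)\in U\times V$. *)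

(* Defs.v *)
From HB Require Import structures.
From mathcomp Require Import all_boot all_order all_algebra.
From mathcomp Require Import all_classical all_reals all_analysis.
Set Implicit Arguments. Unset Strict Implicit. Unset Printing Implicit Defensive.
Import Order.TTheory GRing.Theory Num.Theory.
Import numFieldNormedType.Exports.
Local Open Scope classical_set_scope.
Local Open Scope ring_scope.

(* d(x, D) := inf { ||x - y|| : y in D }, valued in extended reals so that
   d(x, empty) = +oo (the usual convention). *)
Definition dist {R : realType} {X : normedModType R} (x : X) (D : set X) : \bar R :=
  ereal_inf [set (`|x - y|)%:E | y in D].

Definition bouligand_cone {R : realType} {X : normedModType R} (C : set X) (c : X) : set X :=
  [set v | exists (vn : nat -> X) (tn : nat -> R),
      [/\ vn @ \oo --> v, tn @ \oo --> (0 : R),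
          (forall n, 0 < tn n), (forall n, tn n.+1 <= tn n)
        & (forall n, C (c + tn n *: vn n))]].

Definition shapiro_contact {R : realType} {X : normedModType R} (C : set X) (a : X) : Prop :=
  forall eps : R, 0 < eps -> exists2 delta : R, 0 < delta &
    forall x u : X, C x -> C u -> `|x - a| < delta -> `|u - a| < delta ->
      (dist (x - u)%R (bouligand_cone C u) <= (eps * `|x - u|)%:E)%E.

(* Continuously differentiable: Frechet differentiable everywhere and
   x |-> 'd phi x continuous for the operator norm (unfolded:
   sup_{||h||<=1} ||'d phi x' h - 'd phi x h|| <= eps). *)
Definition cont_diff {R : realType} {X Y : normedModType R} (phi : X -> Y) : Prop :=
  (forall x, differentiable phi x) /\
  (forall x (eps : R), 0 < eps -> exists2 delta : R, 0 < delta &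
     forall x', `|x' - x| < delta ->
       forall h : X, `|'d phi x' h - 'd phi x h| <= eps * `|h|).

Definition metrically_regular {R : realType} {X Y : normedModType R}
    (phi : X -> Y) (xbar : X) : Prop :=
  exists kappa : R, 0 < kappa /\
  exists U V, nbhs xbar U /\ nbhs (phi xbar) V /\
    forall x y, U x -> V y ->
      (dist x (phi @^-1` [set y]) <= (kappa * `|phi x - y|)%:E)%E.

(* Main.v *)
Require Import Defs.
From HB Require Import structures.
From mathcomp Require Import all_boot all_order all_algebra.
From mathcomp Require Import all_classical all_reals all_analysis.
From mathcomp Require Import ring lra.
Import Order.TTheory GRing.Theory Num.Theory.
Import numFieldNormedType.Exports.
Local Open Scope classical_set_scope.
Local Open Scope ring_scope.

Set Implicit Arguments. Unset Strict Implicit.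

Lemma idp (U : zmodType) (F1 F2 fa tb sb sL : U) :
  F1 - fa - (tb + sb) - (F2 - fa - tb) = F1 - F2 - sL + (sL - sb).
Proof.
rewrite addrA subrK.
rewrite !opprD !opprK !addrA.
rewrite (addrAC _ fa tb) (addrAC _ (- F2) tb) (addrAC _ (-sb) tb) subrK.
by rewrite (addrAC _ (- F2) fa) (addrAC _ (- sb) fa) subrK addrAC.
Qed.
Lemma norm_tri (K : numDomainType) (V : normedZmodType K) (u v : V) :
  `|u| <= `|v| + `|v - u|.
Proof. by have := ler_distD v u 0; rewrite !subr0 distrC addrC. Qed.

Section Helpers.
Variable R : realType.

Lemma nbhs_ex (V : normedModType R) (x : V) (P : set V) :
  nbhs x P -> exists2 e : R, 0 < e & forall y, `|y - x| < e -> P y.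
Proof.
move=> /nbhs_normP [e e0 He]; exists e => // y hy; apply: He.
by rewrite /= distrC.
Qed.

Lemma diff_eps (V W : normedModType R) (f : V -> W) x :
  differentiable f x -> forall e : R, 0 < e -> exists2 d : R, 0 < d &
    forall h, `|h| < d -> `|f (x + h) - f x - 'd f x h| <= e * `|h|.
Proof.
move=> /diff_locally /eqaddoP H e e0.
have := H e e0 => /nbhs_ex [d d0 Hd]; exists d => // h hd.
have := Hd h; rewrite subr0 => /(_ hd) /=.
by move=> H1; apply: le_trans H1; rewrite !fctE /= opprD addrA [x + h]addrC.
Qed.

Lemma dist_le (V : normedModType R) (x y : V) (D : set V) :
  D y -> (dist x D <= (`|x - y|)%:E)%E.
Proof. by move=> Dy; apply: ereal_inf_lbound; exists y. Qed.

Lemma dist_lt_ex (V : normedModType R) (x : V) (D : set V) (r : R) :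
  (dist x D < r%:E)%E -> exists y, D y /\ `|x - y| < r.
Proof.
move=> /ereal_inf_lt [_ [y Dy <-]]; rewrite lte_fin => h.
by exists y.
Qed.


Lemma mvi (V W : normedModType R) (f : V -> W) (a h : V) (b : W) (eta : R) :
  (forall t, 0 <= t <= 1 -> differentiable f (a + t *: h)) ->
  (forall t, 0 <= t <= 1 -> `|'d f (a + t *: h) h - b| <= eta * `|h|) ->
  `|f (a + h) - f a - b| <= eta * `|h|.
Proof.
move=> Hd Hb; apply/ler_addgt0Pr => e e0.
have h1 : 0 < `|h| + 1 by rewrite ltr_wpDl.
set e' := e / (`|h| + 1).
have e'0 : 0 < e' by rewrite divr_gt0.
pose p t := f (a + t *: h) - f a - t *: b.
set c := (eta + e') * `|h|.
have KLE : forall t, 0 <= t <= 1 -> exists2 d : R, 0 < d &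
    forall s, `|s| < d -> `|p (t + s) - p t| <= c * `|s|.
  move=> t t01; have [d0 d00 Hd0] := diff_eps (Hd t t01) e'0.
  exists (d0 / (`|h| + 1)); first by rewrite divr_gt0.
  move=> s hs.
  have hsh : `|s *: h| < d0.
    rewrite normrZ; move: hs; rewrite ltr_pdivlMr // => hs.
    apply: le_lt_trans hs; apply: ler_wpM2l => //; by rewrite lerDl.
  have -> : p (t + s) - p t = (f (a + t *: h + s *: h) - f (a + t *: h)
      - 'd f (a + t *: h) (s *: h)) + s *: ('d f (a + t *: h) h - b).
    by rewrite /p !scalerDl addrA [in RHS]linearZ scalerBr; apply: idp.
  apply: (le_trans (ler_normD _ _)).
  have -> : c * `|s| = e' * (`|s| * `|h|) + `|s| * (eta * `|h|) by rewrite /c; ring.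
  apply: lerD; first by rewrite -normrZ; exact: Hd0.
  by rewrite normrZ; apply: ler_wpM2l => //; exact: Hb.
have p0 : p 0 = 0 by rewrite /p !scale0r addr0 subrr subr0.
pose S := [set t : R | (0 <= t <= 1) /\ forall t', 0 <= t' <= t -> `|p t'| <= c * t'].
have S0 : S 0.
  split; first by rewrite lexx ler01.
  move=> t' /andP[t0 t1]; have -> : t' = 0 by apply/le_anti; rewrite t0 t1.
  by rewrite p0 normr0 mulr0.
have ubS : ubound S 1 by move=> t [/andP[_ t1] _].
have hsS : has_sup S by split; [exists 0 | exists 1].
pose sg := sup S.
have sg0 : 0 <= sg := sup_upper_bound hsS S0.
have sg1 : sg <= 1 := ge_sup (ex_intro _ 0 S0) ubS.
have [d d0 Hd'] := KLE sg (introT andP (conj sg0 sg1)).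
have C1 : forall t', 0 <= t' < sg -> `|p t'| <= c * t'.
  move=> t' /andP[t'0 t's].
  have ht : 0 < sg - t' by rewrite subr_gt0.
  have [x [_ Sx] hx] := sup_adherent ht hsS.
  apply: Sx; apply/andP; split => //; rewrite -/sg in hx; lra.
have C2 : `|p sg| <= c * sg.
  have [x [x01 Sx] hx] := sup_adherent d0 hsS.
  rewrite -/sg in hx.
  have xs : x <= sg := sup_upper_bound hsS (conj x01 Sx).
  have x0 : 0 <= x by case/andP: x01.
  have := Hd' (x - sg); rewrite (addrC sg) subrK => H.
  have := H _; rewrite distrC ger0_norm ?subr_ge0 // => /(_ ltac:(lra)) {}H.
  apply: (le_trans (norm_tri _ (p x))).
  have := Sx x; rewrite x0 lexx => /(_ isT) Hx.
  have -> : c * sg = c * x + c * (sg - x) by ring.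
  exact: lerD.
have C3 : forall t', 0 <= t' <= sg -> `|p t'| <= c * t'.
  move=> t' /andP[t'0]; rewrite le_eqVlt => /orP[/eqP -> //|t's].
  by apply: C1; rewrite t'0 t's.
have sg_eq1 : sg = 1.
  apply/le_anti; rewrite sg1 /= leNgt; apply/negP => sglt.
  pose s := Order.min (d / 2) (1 - sg).
  have s0 : 0 < s by rewrite lt_min divr_gt0 //= subr_gt0.
  have s1 : s <= 1 - sg by rewrite ge_min lexx orbT.
  have s2 : s <= d / 2 by rewrite ge_min lexx.
  have Ss : S (sg + s).
    split; first by apply/andP; split; lra.
    move=> t' /andP[t'0 t'le].
    have [t's|t's] := leP t' sg; first by apply: C3; rewrite t'0 t's.
    have := Hd' (t' - sg); rewrite (addrC sg) subrK gtr0_norm ?subr_gt0 //.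
    move=> /(_ ltac:(lra)) H.
    apply: (le_trans (norm_tri _ (p sg))); rewrite [`|p sg - _|]distrC.
    have -> : c * t' = c * sg + c * (t' - sg) by ring.
    exact: lerD.
  have := sup_upper_bound hsS Ss; rewrite -/sg; lra.
have H : `|p 1| <= c * 1 by apply: C3; rewrite ler01 sg_eq1 lexx.
move: H; rewrite /p mulr1 /c !scale1r => H; apply: (le_trans H).
rewrite mulrDl lerD2l /e' mulrAC ler_pdivrMr // ler_wpM2l //; first exact: ltW.
by rewrite lerDl.
Qed.

Lemma cone_charac (V : normedModType R) (C : set V) (u v : V) :
  (forall e : R, 0 < e -> forall tau : R, 0 < tau -> exists t : R, exists z : V,
     [/\ 0 < t, t < tau, `|z - v| < e & C (u + t *: z)]) ->
  bouligand_cone C u v.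
Proof.
move=> H.
have H' : forall q : nat * R, exists p : R * V, 0 < q.2 ->
    [/\ 0 < p.1, p.1 < q.2, `|p.2 - v| < q.1.+1%:R^-1 & C (u + p.1 *: p.2)].
  move=> [n tau] /=; case: (pselect (0 < tau)) => [tau0|ntau]; last first.
    by exists (0, v).
  have [t [z [? ? ? ?]]] := H _ (@harmonic_gt0 R n) tau tau0.
  by exists (t, z).
have [F HF] := choice H'.
pose tau := fix tau (n : nat) : R :=
  if n is m.+1 then Order.min (F (m, tau m)).1 (m.+2%:R^-1) else 1.
have Htau : forall n, 0 < tau n /\ tau n <= n.+1%:R^-1.
  elim=> [|n [IH1 IH2]]; first by rewrite /= invr1 ltr01 lexx.
  have [t0 _ _ _] := HF (n, tau n) IH1.
  split; first by rewrite /= lt_min t0 /=.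
  by rewrite /= ge_min lexx orbT.
exists (fun n => (F (n, tau n)).2), (fun n => (F (n, tau n)).1).
split.
- apply/cvgrPdist_lt => eps eps0.
  apply: (filterS _ (cvgr0_norm_lt _ (@cvg_harmonic R) _ eps0)) => n /= hn.
  have [_ _ h3 _] := HF (n, tau n) (Htau n).1.
  rewrite distrC; apply: (lt_trans h3); apply: le_lt_trans hn.
  by rewrite ger0_norm.
- apply/cvgrPdist_lt => eps eps0.
  apply: (filterS _ (cvgr0_norm_lt _ (@cvg_harmonic R) _ eps0)) => n /= hn.
  have [h1 h2 _ _] := HF (n, tau n) (Htau n).1.
  rewrite sub0r normrN gtr0_norm //; apply: (lt_le_trans h2).
  apply: ltW; apply: (le_lt_trans (Htau n).2); apply: le_lt_trans hn.
  by rewrite ger0_norm.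
- by move=> n; have [] := HF (n, tau n) (Htau n).1.
- move=> n; have [h1 h2 _ _] := HF (n.+1, tau n.+1) (Htau n.+1).1.
  apply: (ltW (lt_le_trans h2 _)).
  by rewrite /= ge_min lexx.
- by move=> n; have [] := HF (n, tau n) (Htau n).1.
Qed.

Lemma lin_open (X : completeNormedModType R) (Y : normedModType R)
    (L : {linear X -> Y}) (c : R) :
  continuous L -> 0 < c ->
  (forall y, exists h, `|h| <= c * `|y| /\ `|L h - y| <= `|y| / 2) ->
  forall y, exists v, L v = y /\ `|v| <= 2 * c * `|y|.
Proof.
move=> Lc c0 Happ y.
have [g Hg] := choice Happ.
pose ys := fix ys n := if n is m.+1 then ys m - L (g (ys m)) else y.
pose hs n := g (ys n).
have ys_le : forall n, `|ys n.+1| <= `|ys n| / 2.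
  by move=> n /=; rewrite -normrN opprB; exact: (Hg _).2.
have ys_geo : forall n, `|ys n| <= (2^-1)^+n * `|y|.
  elim => [|n IH]; first by rewrite expr0 mul1r.
  apply: (le_trans (ys_le n)); rewrite exprS -mulrA mulrC.
  by apply: ler_wpM2l.
have Lsum : forall n, L (series hs n) = y - ys n.
  elim => [|n IH].
    by rewrite /series /= big_geq // linear0 subrr.
  by rewrite seriesSr linearD IH /= opprB addrA addrAC.
have bnd : forall n, [normed series hs] n + 2 * c * `|ys n| <= 2 * c * `|y|.
  elim => [|n IH].
    have -> : [normed series hs] 0%N = 0.
      by first [rewrite /= /series /= big_geq // | rewrite /= seriesEord /= big_ord0].
    by rewrite add0r.
  rewrite /= seriesSr -/([normed series hs] n).
  have h1 : `|hs n| <= c * `|ys n| := (Hg _).1.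
  have h2 : 2 * c * `|ys n.+1| <= 2 * c * (`|ys n| / 2).
    by apply: ler_wpM2l => //; rewrite mulr_ge0 // ltW.
  rewrite (_ : 2 * c * (`|ys n| / 2) = c * `|ys n|) in h2; last by field.
  move: IH h1 h2 => /=; lra.
have ncvg : cvgn [normed series hs].
  apply: nondecreasing_is_cvgn.
    apply/nondecreasing_seqP => n; rewrite /= seriesSr.
    by rewrite lerDl.
  exists (2 * c * `|y|) => _ [n _ <-].
  apply: le_trans (bnd n); rewrite lerDl.
  by rewrite mulr_ge0 // mulr_ge0 // ltW.
have scvg := normed_cvg ncvg.
have ys0 : ys @ \oo --> 0.
  apply/cvgr0Pnorm_lt => eps eps0.
  have e1 : 0 < eps / (`|y| + 1) by rewrite divr_gt0 // ltr_wpDl.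
  have h2 : `|(2^-1 : R)| < 1 by rewrite ger0_norm // invf_lt1 // ltr1n.
  apply: (filterS _ (cvgr0_norm_lt _ (cvg_expr h2) _ e1)) => n /= hn.
  apply: (le_lt_trans (ys_geo n)).
  move: hn; rewrite ger0_norm ?exprn_ge0 // ltr_pdivlMr ?ltr_wpDl // => hn.
  apply: le_lt_trans hn; apply: ler_wpM2l; first exact: exprn_ge0.
  by rewrite lerDl.
exists (limn (series hs)); split.
  have H1 : (L \o series hs) @ \oo --> L (limn (series hs)).
    apply: continuous_cvg; [exact: Lc | exact: scvg].
  have H2 : (L \o series hs) @ \oo --> y.
    have -> : L \o series hs = (fun n => y - ys n) by apply: funext => n; exact: Lsum.
    rewrite -[X in _ --> X]subr0; apply: cvgB => //; exact: cvg_cst.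
  exact: (cvg_unique _ H1 H2).
apply: (le_trans (lim_series_norm ncvg)).
apply: limr_le => //; apply: nearW => n.
apply: le_trans (bnd n); rewrite lerDl.
by rewrite mulr_ge0 // mulr_ge0 // ltW.
Qed.

Lemma mr_pt (X Y : normedModType R) (phi : X -> Y) (kappa : R) (U : set X) (V : set Y) :
  (forall x y, U x -> V y -> (dist x (phi @^-1` [set y]) <= (kappa * `|phi x - y|)%:E)%E) ->
  forall x y s, U x -> V y -> 0 < s ->
  exists z, phi z = y /\ `|x - z| < kappa * `|phi x - y| + s.
Proof.
move=> HMR x y s Ux Vy s0.
have : (dist x (phi @^-1` [set y]) < (kappa * `|phi x - y| + s)%:E)%E.
  apply: (le_lt_trans (HMR _ _ Ux Vy)); rewrite lte_fin.
  by rewrite ltrDl.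
by move=> /dist_lt_ex [z [Hz Hlt]]; exists z.
Qed.

Lemma lemA (X : completeNormedModType R) (Y : normedModType R) (phi : X -> Y)
    (u : X) (kappa r sV : R) (U : set X) (V : set Y) :
  differentiable phi u -> 0 < kappa -> 0 < r -> 0 < sV ->
  (forall x y, U x -> V y -> (dist x (phi @^-1` [set y]) <= (kappa * `|phi x - y|)%:E)%E) ->
  (forall z, `|z - u| < r -> U z) -> (forall y, `|y - phi u| < sV -> V y) ->
  forall y, exists v, 'd phi u v = y /\ `|v| <= 2 * (kappa + 1) * `|y|.
Proof.
move=> Du k0 r0 sV0 HMR HU HV.
have c0 : 0 < kappa + 1 by rewrite ltr_wpDl // ltW.
apply: lin_open => //; first exact: diff_continuous.
move=> y; have [->|y0] := eqVneq y 0.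
  by exists 0; rewrite linear0 subrr !normr0 mulr0 lexx mul0r.
have ny0 : 0 < `|y| by rewrite normr_gt0.
have eta0 : 0 < (2 * (kappa + 1))^-1 by rewrite invr_gt0 mulr_gt0.
have [rho rho0 Hrho] := diff_eps Du eta0.
pose m := Order.min rho (Order.min r (sV / 2)).
have m0 : 0 < m by rewrite !lt_min rho0 r0 divr_gt0.
have [t [t0 tcy]] : exists t, 0 < t /\ t * (kappa + 1) * `|y| = m / 2.
  exists (m / (2 * (kappa + 1) * `|y|)); split; first by rewrite divr_gt0 // !mulr_gt0.
  field; apply/andP; split; apply/negP => /eqP H; lra.
have ty0 : 0 < t * `|y| by rewrite mulr_gt0.
have ty_le : t * `|y| <= t * (kappa + 1) * `|y|.
  have h1 : 1 <= kappa + 1 by lra.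
  by have := ler_peMr (ltW ty0) h1; rewrite mulrAC.
have m_rho : m <= rho by rewrite ge_min lexx.
have m_sV : m <= sV / 2 by rewrite !ge_min lexx !orbT.
have [z [Hz Hzu]] : exists z, phi z = phi u + t *: y /\
    `|u - z| < kappa * `|phi u - (phi u + t *: y)| + t * `|y|.
  apply: (@mr_pt _ _ phi kappa U V HMR).
  - by apply: HU; rewrite subrr normr0.
  - apply: HV; rewrite addrC addKr normrZ gtr0_norm //.
    have : m / 2 < m by rewrite ltr_pdivrMr // ltr_pMr // ltr1n.
    lra.
  - exact: ty0.
rewrite (_ : phi u - (phi u + t *: y) = - (t *: y)) in Hzu; last first.
  by rewrite opprD addrA subrr add0r.
rewrite normrN normrZ gtr0_norm // in Hzu.
have hk : `|z - u| < t * (kappa + 1) * `|y|.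
  rewrite distrC (_ : t * (kappa + 1) * `|y| = kappa * (t * `|y|) + t * `|y|) //.
  by ring.
have hm : m / 2 < m by rewrite ltr_pdivrMr // ltr_pMr // ltr1n.
have hk' : `|z - u| < rho by lra.
have Hk := Hrho (z - u) hk'.
rewrite [u + (z - u)]addrC subrK Hz [phi u + _]addrC addrK in Hk.
exists (t^-1 *: (z - u)); split.
  rewrite normrZ gtr0_norm ?invr_gt0 // ler_pdivrMl //.
  by rewrite mulrA ltW.
rewrite linearZ /= -[X in _ - X](scalerK (lt0r_neq0 t0)) -scalerBr normrZ.
rewrite gtr0_norm ?invr_gt0 // distrC ler_pdivrMl //.
apply: (le_trans Hk).
have -> : t * (`|y| / 2) = (2 * (kappa + 1))^-1 * (t * (kappa + 1) * `|y|).
  by field; do ?[apply/andP; split]; apply/negP => /eqP H; lra.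
by apply: ler_wpM2l; [exact: ltW | exact: ltW].
Qed.

Lemma lt_div_aux (t a b : R) : 0 < t -> 0 <= b -> t < a / (b + 1) -> t * b < a.
Proof.
move=> t0 b0; rewrite ltr_pdivlMr ?ltr_wpDl // => h.
apply: le_lt_trans h; apply: ler_wpM2l; [exact: ltW | by rewrite lerDl].
Qed.

Lemma idp2 (U : zmodType) (a b c d : U) : a - (b + c) = (a - b - d) + (d - c).
Proof. by rewrite addrA subrK opprD addrA. Qed.

Lemma lemB (X Y : normedModType R) (phi : X -> Y)
    (u : X) (kappa r sV : R) (U : set X) (V : set Y) (A : set Y) :
  differentiable phi u -> 0 < kappa -> 0 < r -> 0 < sV ->
  (forall x y, U x -> V y -> (dist x (phi @^-1` [set y]) <= (kappa * `|phi x - y|)%:E)%E) ->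
  (forall z, `|z - u| < r -> U z) -> (forall y, `|y - phi u| < sV -> V y) ->
  forall v, bouligand_cone A (phi u) ('d phi u v) -> bouligand_cone (phi @^-1` A) u v.
Proof.
move=> Du k0 r0 sV0 HMR HU HV v [wn [tn [wcvg tcvg tpos tdec Aw]]].
apply: cone_charac => e e0 tau tau0.
have k1 : 0 < kappa + 1 by rewrite ltr_wpDl // ltW.
pose q := e / (4 * (kappa + 1)).
have q0 : 0 < q by rewrite divr_gt0 // mulr_gt0.
pose eta1 := q / (`|v| + 1).
have eta0 : 0 < eta1 by rewrite divr_gt0 // ltr_wpDl.
have [rho1 rho0 Hrho] := diff_eps Du eta0.
pose m1 := Order.min 1 q.
have m10 : 0 < m1 by rewrite lt_min ltr01 q0.
pose m2 := Order.min tau (Order.min (rho1 / (`|v| + 1))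
   (Order.min (r / (`|v| + 1)) ((sV / 2) / (`|'d phi u v| + 1)))).
have m20 : 0 < m2.
  by rewrite !lt_min tau0 !divr_gt0 // ?ltr_wpDl.
have E1 : \forall k \near \oo, `|'d phi u v - wn k| < m1 .
  by apply: (cvgr_dist_lt _ _ wcvg).
have E2 : \forall k \near \oo, `|0 - tn k| < m2 .
  by apply: (cvgr_dist_lt _ _ tcvg).
have [n [h1 h2]] := filter_ex (filterI E1 E2).
rewrite sub0r normrN gtr0_norm ?tpos // in h2.
move: h1 h2; set t := tn n; set w := wn n => h1 h2.
have t0 : 0 < t := tpos n.
have htau : t < tau by apply: (lt_le_trans h2); rewrite ge_min lexx.
have hrho : t * `|v| < rho1.
  by apply: lt_div_aux => //; apply: (lt_le_trans h2); rewrite !ge_min lexx !orbT.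
have hr : t * `|v| < r.
  by apply: lt_div_aux => //; apply: (lt_le_trans h2); rewrite !ge_min lexx !orbT.
have hw : `|w| <= `|'d phi u v| + 1.
  have := norm_tri w ('d phi u v); have : `|'d phi u v - w| <= 1.
    by apply: ltW; apply: (lt_le_trans h1); rewrite ge_min lexx.
  lra.
have hsV : t * `|w| < sV / 2.
  apply: le_lt_trans (ler_wpM2l (ltW t0) hw) _.
  rewrite -ltr_pdivlMr ?ltr_wpDl //; apply: (lt_le_trans h2).
  by rewrite !ge_min lexx !orbT.
have e20 : 0 < t * (e / 2) by rewrite mulr_gt0 // divr_gt0.
have [z [Hz Hzu]] : exists z, phi z = phi u + t *: w /\
    `|(u + t *: v) - z| < kappa * `|phi (u + t *: v) - (phi u + t *: w)| + t * (e / 2).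
  apply: (@mr_pt _ _ phi kappa U V HMR) => //.
  - by apply: HU; rewrite [u + _]addrC addrK normrZ gtr0_norm.
  - apply: HV; rewrite [phi u + _]addrC addrK normrZ gtr0_norm //.
    have : sV / 2 < sV by rewrite ltr_pdivrMr // ltr_pMr // ltr1n.
    lra.
have Hd1 := Hrho (t *: v) ltac:(by rewrite normrZ gtr0_norm).
have Hphi : `|phi (u + t *: v) - (phi u + t *: w)| <= eta1 * (t * `|v|) + t * `|'d phi u v - w|.
  rewrite (idp2 _ _ _ (t *: 'd phi u v)).
  apply: (le_trans (ler_normD _ _)); apply: lerD.
    by move: Hd1; rewrite linearZ normrZ gtr0_norm.
  by rewrite -scalerBr normrZ gtr0_norm.
have hLw : `|'d phi u v - w| <= q by apply: ltW; apply: (lt_le_trans h1); rewrite ge_min lexx orbT.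
have hev : eta1 * `|v| <= q.
  rewrite /eta1 mulrAC ler_pdivrMr ?ltr_wpDl // ler_wpM2l //; first exact: ltW.
  by rewrite lerDl.
have hX : kappa * (eta1 * `|v| + `|'d phi u v - w|) <= e / 2.
  apply: (le_trans (ler_wpM2l (ltW k0) (lerD hev hLw))).
  have -> : kappa * (q + q) = e / 2 - e / (2 * (kappa + 1)).
    by rewrite /q; field; do ?[apply/andP; split]; apply/negP => /eqP H; lra.
  rewrite lerBlDr lerDl; apply: ltW; rewrite divr_gt0 // mulr_gt0 //.
have hfin : `|(u + t *: v) - z| < t * e.
  apply: (lt_le_trans Hzu).
  have : kappa * `|phi (u + t *: v) - (phi u + t *: w)| <= t * (e / 2).
    apply: (le_trans (ler_wpM2l (ltW k0) Hphi)).
    rewrite (_ : kappa * (eta1 * (t * `|v|) + t * `|'d phi u v - w|) =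
      t * (kappa * (eta1 * `|v| + `|'d phi u v - w|))); last by ring.
    by apply: ler_wpM2l => //; apply: ltW.
  move=> H; rewrite (_ : t * e = t * (e / 2) + t * (e / 2)); last by field.
  by apply: lerD.
exists t, (t^-1 *: (z - u)); split => //.
- rewrite -[X in _ - X](scalerK (lt0r_neq0 t0)) -scalerBr normrZ.
  rewrite gtr0_norm ?invr_gt0 // ltr_pdivrMl // distrC.
  by rewrite (_ : t *: v - (z - u) = u + t *: v - z) // opprB addrA addrC addrA [LHS]addrAC [RHS]addrC addrA.
- by rewrite /preimage /= scalerKV ?lt0r_neq0 // addrC subrK Hz; exact: Aw.
Qed.

Lemma cont_eps (X Y : normedModType R) (f : X -> Y) (x : X) :
  {for x, continuous f} -> forall e : R, 0 < e ->
  exists2 d : R, 0 < d & forall z, `|z - x| < d -> `|f z - f x| < e.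
Proof.
move=> fc e e0.
have /nbhs_ex [d d0 Hd] : \forall z \near x, `|f x - f z| < e.
  by apply: (cvgr_dist_lt _ _ fc).
by exists d => // z hz; rewrite distrC; exact: Hd.
Qed.

End Helpers.
Unset Implicit Arguments.

Theorem proposition3p4 (R : realType) (X Y : completeNormedModType R)
    (phi : X -> Y) (A : set Y) (xbar : X) :
  cont_diff phi -> closed A -> A (phi xbar) ->
  shapiro_contact A (phi xbar) -> metrically_regular phi xbar ->
  shapiro_contact (phi @^-1` A) xbar.
Proof.
move=> [Dphi Dcont] Aclosed Ax SA [kappa [k0 [U [V [NU [NV HMR]]]]]].
move=> eps eps0.
have [r1 r10 HU1] := nbhs_ex NU.
have [sV sV0 HV1] := nbhs_ex NV.
have phic : {for xbar, continuous phi} := differentiable_continuous (Dphi xbar).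
have sV20 : 0 < sV / 2 by rewrite divr_gt0.
have [r2 r20 Hr2] := cont_eps phic sV20.
pose r0 := Order.min r1 r2 / 2.
have r00 : 0 < r0 by rewrite divr_gt0 // lt_min r10 r20.
have r0r1 : r0 + r0 <= r1.
  have : Order.min r1 r2 <= r1 by rewrite ge_min lexx.
  rewrite /r0; lra.
have r0r2 : r0 < r2.
  have : Order.min r1 r2 <= r2 by rewrite ge_min lexx orbT.
  have : 0 < Order.min r1 r2 by rewrite lt_min r10 r20.
  rewrite /r0; lra.
have HUu : forall u z, `|u - xbar| < r0 -> `|z - u| < r0 -> U z.
  move=> u z hu hz; apply: HU1.
  apply: (le_lt_trans (ler_distD u z xbar)); lra.
have HVu : forall u y, `|u - xbar| < r0 -> `|y - phi u| < sV / 2 -> V y.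
  move=> u y hu hy; apply: HV1.
  have := Hr2 u ltac:(lra).
  have := ler_distD (phi u) y (phi xbar); lra.
pose K := 2 * (kappa + 1).
have K0 : 0 < K by rewrite mulr_gt0 // ltr_wpDl // ltW.
have [d1 d10 Hd1] := Dcont xbar 1 ltr01.
have [k kp Hk] := linear_lipschitz (diff_continuous (Dphi xbar)).
pose M := k + 1.
have M0 : 0 < M by rewrite ltr_wpDl // ltW.
pose eta := eps / (3 * K).
have eta0 : 0 < eta by rewrite divr_gt0 // mulr_gt0.
have [d2 d20 Hd2] := Dcont xbar (eta / 2) ltac:(by rewrite divr_gt0).
pose epsA := eps / (3 * K * (M + eta)).
have epsA0 : 0 < epsA by rewrite divr_gt0 // !mulr_gt0 // addr_gt0.
have [dA dA0 HdA] := SA epsA epsA0.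
have [r3 r30 Hr3] := cont_eps phic dA0.
exists (Order.min r0 (Order.min d1 (Order.min (d2 / 3) r3))).
  by rewrite !lt_min r00 d10 r30 divr_gt0.
move=> x u Cx Cu; rewrite !lt_min => /and4P[hx0 hx1 hx2 hx3] /and4P[hu0 hu1 hu2 hu3].
have [xu|xu] := eqVneq x u.
  rewrite xu subrr normr0 mulr0.
  have T0 : bouligand_cone (phi @^-1` A) u 0.
    apply: cone_charac => e e0 tau tau0.
    exists (tau / 2), 0; split.
    - by rewrite divr_gt0.
    - by rewrite ltr_pdivrMr // ltr_pMr // ltr1n.
    - by rewrite subrr normr0.
    - by rewrite scaler0 addr0.
  by apply: (le_trans (dist_le _ T0)); rewrite subrr normr0.
have hn0 : 0 < `|x - u| by rewrite normr_gt0 subr_eq0.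
set h := x - u.
set L := 'd phi u.
have Hstrict : `|phi x - phi u - L h| <= eta * `|h|.
  have -> : x = u + h by rewrite /h addrC subrK.
  apply: mvi => [t t01|t t01]; first exact: Dphi.
  have hz : `|u + t *: h - xbar| < d2.
    rewrite addrAC; apply: (le_lt_trans (ler_normD _ _)).
    have : `|t *: h| <= `|h|.
      rewrite normrZ; case/andP: t01 => t0 t1.
      by rewrite ger0_norm // ler_piMl.
    have := ler_distD xbar x u.
    rewrite -/h [`|xbar - u|]distrC; lra.
  apply: (le_trans (ler_distD ('d phi xbar h) _ _)).
  have := Hd2 _ hz h; have := Hd2 u ltac:(lra) h.
  rewrite [`|'d phi xbar h - _|]distrC; lra.
have HLh : `|L h| <= M * `|h|.
  apply: (le_trans (norm_tri _ ('d phi xbar h))).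
  have := Hd1 u ltac:(lra) h; have := Hk h.
  rewrite [`|'d phi xbar h - _|]distrC /M; lra.
have HD : `|phi x - phi u| <= (M + eta) * `|h|.
  apply: (le_trans (norm_tri _ (L h))).
  rewrite [`|L h - _|]distrC; lra.
have SAxu := HdA _ _ Cx Cu (Hr3 _ hx3) (Hr3 _ hu3).
pose s := eps * `|h| / (3 * K).
have s0 : 0 < s by apply: divr_gt0; apply: mulr_gt0 => //.
have [w [Tw Hw]] : exists w, bouligand_cone A (phi u) w /\
    `|phi x - phi u - w| < epsA * `|phi x - phi u| + s.
  apply: dist_lt_ex; apply: (le_lt_trans SAxu); rewrite lte_fin.
  by rewrite ltrDl.
have [v0 [Lv0 Hv0]] := lemA (Dphi u) k0 r00 sV20 HMR (fun z => HUu u z hu0) (fun y => HVu u y hu0) (w - L h).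
have Tv : bouligand_cone (phi @^-1` A) u (h + v0).
  apply: (lemB (Dphi u) k0 r00 sV20 HMR (fun z => HUu u z hu0) (fun y => HVu u y hu0)).
  by rewrite linearD -/L Lv0 addrC subrK.
apply: (le_trans (dist_le _ Tv)); rewrite lee_fin.
rewrite opprD addrA subrr add0r normrN.
apply: (le_trans Hv0).
have Hwl : `|w - L h| <= eps * `|h| / K.
  apply: (le_trans (ler_distD (phi x - phi u) _ _)).
  have h1 : epsA * `|phi x - phi u| <= epsA * ((M + eta) * `|h|).
    by apply: ler_wpM2l => //; exact: ltW.
  have h2 : epsA * ((M + eta) * `|h|) = s.
    rewrite /epsA /s; field; do ?[apply/andP; split]; apply/negP => /eqP H; lra.
  have h3 : eta * `|h| = s by rewrite /eta /s; field; apply/negP => /eqP H; lra.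
  have h4 : eps * `|h| / K = s + s + s.
    rewrite /s; field; apply/negP => /eqP H; lra.
  rewrite h4 distrC; lra.
rewrite (_ : eps * `|h| = K * (eps * `|h| / K)); last first.
  by field; apply/negP => /eqP H; lra.
by apply: ler_wpM2l => //; exact: ltW.
Qed.
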